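(* Let $S\subseteq\mathbb{R}^+\cup\{0\}$ with $S\neq\emptyset$, and let $\mathbf{P}=(X,P)$ be a finite poset belonging to $C(S)$. (1) If $\mathbf{P}$ has a twin-free $S$-representation, then $\mathbf{P}$ has a distinguishing $S$-representation. (2) If $0\notin S$, then $\mathbf{P}$ has a distinguishing $S$-representation.
   Context: An interval representation of a poset $(X,P)$ assigns to each $x\in X$ a closed real interval $[l_x,r_x]$ (with $l_x\le r_x$; length $r_x-l_x$, possibly $0$) such that for all $x,y\in X$: $x<y$ in $P$ if and only if $r_x<l_y$. For $S\subseteq\mathbb{R}^+\cup\{0\}$, an $S$-representation is an interval representation in which every interval length lies in $S$, and $C(S)$ is the class of posets having an $S$-representation. A representation is twin-free if no two distinct elements of $X$ are assigned the same interval. A representation is distinguishing if every real number occurs at most once as an endpoint of an interval of the representation, i.e. no two intervals share an endpoint. *)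

(* Defs.v *)
From HB Require Import structures.
From mathcomp Require Import all_boot all_order all_algebra.
From mathcomp Require Import reals.
Set Implicit Arguments. Unset Strict Implicit. Unset Printing Implicit Defensive.
Import Order.TTheory GRing.Theory Num.Theory.
Local Open Scope ring_scope.

(* A poset (X,P) is a finite partially ordered type X; x < y in P is (x < y)%O.
   An interval representation assigns to x the closed interval [l x, r x]. *)
Definition interval_rep (R : realType) (d : Order.disp_t) (X : finPOrderType d)
  (l r : X -> R) : Prop :=
  (forall x, l x <= r x) /\ (forall x y : X, (x < y)%O <-> r x < l y).

Definition S_rep (R : realType) (d : Order.disp_t) (X : finPOrderType d)
  (S : R -> Prop) (l r : X -> R) : Prop :=
  interval_rep l r /\ (forall x, S (r x - l x)).

Definition in_C (R : realType) (d : Order.disp_t) (X : finPOrderType d)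
  (S : R -> Prop) : Prop :=
  exists l r : X -> R, S_rep S l r.

Definition twin_free (R : realType) (d : Order.disp_t) (X : finPOrderType d)
  (l r : X -> R) : Prop :=
  forall x y : X, l x = l y -> r x = r y -> x = y.

Definition distinguishing (R : realType) (d : Order.disp_t) (X : finPOrderType d)
  (l r : X -> R) : Prop :=
  forall x y : X, x <> y ->
    [/\ l x <> l y, l x <> r y, r x <> l y & r x <> r y].

(* Main.v *)
Require Import Defs.
From HB Require Import structures.
From mathcomp Require Import all_boot all_order all_algebra.
From mathcomp Require Import reals.
From mathcomp Require Import ring lra.
Import Order.TTheory GRing.Theory Num.Theory.
Local Open Scope ring_scope.

Definition near0 (R : realType) (P : R -> Prop) :=
  exists2 de : R, 0 < de & forall e, 0 < e -> e <= de -> P e.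
Arguments near0 {R}.

Lemma near0_and {R : realType} {P Q : R -> Prop} :
  near0 P -> near0 Q -> near0 (fun e => P e /\ Q e).
Proof.
move=> [a a0 Ha] [b b0 Hb]; exists (Order.min a b); first by rewrite lt_min a0 b0.
move=> e e0 eab; split; [apply: Ha|apply: Hb] => //; apply: (le_trans eab);
  by rewrite ge_min lexx ?orbT.
Qed.

Lemma near0_all (T : finType) (R : realType) (P : T -> R -> Prop) :
  (forall i, near0 (P i)) -> near0 (fun e => forall i, P i e).
Proof.
move=> H.
suff: forall s : seq T, near0 (fun e => forall i, i \in s -> P i e).
  by move=> /(_ (enum T)) [de de0 Hd]; exists de => // e e0 ed i; apply: Hd => //; rewrite mem_enum.
elim=> [|a s IH]; first by exists 1 => //.
have [de de0 Hd] := near0_and (H a) IH.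
exists de => // e e0 ed i; rewrite in_cons => /orP [/eqP->|iS].
  by case: (Hd e e0 ed).
by case: (Hd e e0 ed) => _; apply.
Qed.

Lemma near0_sign {R : realType} (g c : R) :
  near0 (fun e => (0 < g -> 0 < g - e * c) /\ (g < 0 -> g - e * c < 0)).
Proof.
have [g0|gn0] := eqVneq g 0.
  by exists 1 => // e _ _; rewrite g0 ltxx; split.
have ng : 0 < `|g| by rewrite normr_gt0.
have c1 : 0 < `|c| + 1 by have := normr_ge0 c; lra.
exists (`|g| / (`|c| + 1)); first by rewrite divr_gt0.
move=> e e0; rewrite ler_pdivlMr // => he.
have hec : `|e * c| < `|g|.
  rewrite normrM (gtr0_norm e0).
  have : e * `|c| + e <= `|g| by rewrite mulrDr mulr1 in he.
  lra.
have h1 := ler_norm (e * c).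
have h2 : - (e * c) <= `|e * c| by rewrite -normrN ler_norm.
split=> hg.
  rewrite (gtr0_norm hg) in hec; lra.
rewrite (ltr0_norm hg) in hec; lra.
Qed.

Lemma core {R : realType} {d : Order.disp_t} {X : finPOrderType d}
  {S : R -> Prop} {l r : X -> R} :
  S_rep S l r ->
  (forall x y, x <> y -> r x = l y -> l x + r x < l y + r y) ->
  exists l r : X -> R, S_rep S l r /\ distinguishing l r.
Proof.
move=> [[lr ord] HS] Hb.
pose k (x : X) : R := (nat_of_ord (enum_rank x))%:R.
have kinj : forall x y, x <> y -> k x - k y != 0.
  move=> x y xy; rewrite subr_eq0 eqr_nat; apply/negP => /eqP h.
  by apply: xy; apply: enum_rank_inj; apply: val_inj.
pose m (eta : R) x := l x + r x + eta * k x.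
have [eta eta0 Heta] : near0 (fun eta => forall p : X * X,
    (p.1 <> p.2 -> m eta p.1 - m eta p.2 != 0) /\
    (p.1 <> p.2 -> r p.1 = l p.2 -> m eta p.1 - m eta p.2 < 0)).
  apply: near0_all => -[x y] /=.
  have [de de0 Hd] := near0_sign (l x + r x - (l y + r y)) (k y - k x).
  exists de => // e e0 ed; have [Hp Hn] := Hd e e0 ed.
  have -> : m e x - m e y = l x + r x - (l y + r y) - e * (k y - k x)
    by rewrite /m; ring.
  split=> xy.
    have [s0|sn|sp] := ltgtP (l x + r x - (l y + r y)) 0.
    - by rewrite lt_eqF // Hn.
    - by rewrite gt_eqF // Hp.
    - rewrite sp; have := kinj _ _ xy; apply: contraNN.
      rewrite subr_eq0 => /eqP h; rewrite -subr_eq0.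
      have : e * (k x - k y) = 0.
        have -> : e * (k x - k y) = - (e * (k y - k x)) by ring.
        by rewrite -h oppr0.
      by move=> hh; move/eqP: hh; rewrite subr0 mulf_eq0 (gt_eqF e0).
  move=> rl; apply: Hn; have := Hb _ _ xy rl; lra.
pose M := m eta.
have Mne : forall x y, x <> y -> M x - M y != 0 by move=> x y xy; exact: (Heta _ eta0 (lexx eta) (x, y)).1.
have Mlt : forall x y, x <> y -> r x = l y -> M x - M y < 0
  by move=> x y xy; exact: (Heta _ eta0 (lexx eta) (x, y)).2.
have [e e0 He] : near0 (fun e => forall p : X * X,
    ((0 < r p.1 - l p.2 -> 0 < r p.1 - l p.2 - e * (M p.1 - M p.2)) /\
     (r p.1 - l p.2 < 0 -> r p.1 - l p.2 - e * (M p.1 - M p.2) < 0))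
 /\ (((0 < l p.1 - l p.2 -> 0 < l p.1 - l p.2 - e * (M p.1 - M p.2)) /\
     (l p.1 - l p.2 < 0 -> l p.1 - l p.2 - e * (M p.1 - M p.2) < 0))
 /\ ((0 < r p.1 - r p.2 -> 0 < r p.1 - r p.2 - e * (M p.1 - M p.2)) /\
     (r p.1 - r p.2 < 0 -> r p.1 - r p.2 - e * (M p.1 - M p.2) < 0)))).
  apply: near0_all => p; apply: near0_and; last apply: near0_and;
  exact: near0_sign.
exists (fun x => l x - e * M x), (fun x => r x - e * M x).
have eq1 : forall x y, (r x - e * M x) - (l y - e * M y) = r x - l y - e * (M x - M y)
  by move=> x y; ring.
have eq2 : forall x y, (l x - e * M x) - (l y - e * M y) = l x - l y - e * (M x - M y)
  by move=> x y; ring.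
have eq3 : forall x y, (r x - e * M x) - (r y - e * M y) = r x - r y - e * (M x - M y)
  by move=> x y; ring.
have neq_of : forall (g dM : R), (0 < g -> 0 < g - e * dM) -> (g < 0 -> g - e * dM < 0) ->
    (g = 0 -> dM != 0) -> g - e * dM != 0.
  move=> g dM Hp Hn Hz; have [gn|gp|g0] := ltgtP g 0.
  - by rewrite lt_eqF // Hn.
  - by rewrite gt_eqF // Hp.
  - rewrite g0 sub0r oppr_eq0 mulf_eq0 negb_or gt_eqF //=; exact: Hz.
have neqE : forall a b : R, a - b != 0 -> a <> b.
  by move=> a b h ab; move: h; rewrite ab subrr eqxx.
split; last first.
  move=> x y xy; have [[H1p H1n] [[H2p H2n] [H3p H3n]]] := He _ e0 (lexx e) (x, y).
  have [[H4p H4n] _] := He _ e0 (lexx e) (y, x).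
  split.
  - apply: neqE; rewrite eq2; apply: neq_of => // _; exact: Mne.
  - apply/nesym/neqE; rewrite eq1; apply: neq_of => // h.
    apply: Mne; exact/nesym.
  - apply: neqE; rewrite eq1; apply: neq_of => // h; exact: Mne.
  - apply: neqE; rewrite eq3; apply: neq_of => // _; exact: Mne.
split; last by move=> x; have -> : r x - e * M x - (l x - e * M x) = r x - l x by ring.
split; first by move=> x; have := lr x; lra.
move=> x y; rewrite ord; have [[H1p H1n] _] := He _ e0 (lexx e) (x, y).
have E := eq1 x y.
split=> h.
  have := H1n ltac:(lra); lra.
have h' : r x - l y - e * (M x - M y) < 0 by lra.
have [gn|gp|g0] := ltgtP (r x - l y) 0; first lra.
  by have := H1p gp; lra.
have [xy|xy] := eqVneq x y.
  by move: h'; rewrite g0 xy subrr mulr0 subr0 ltxx.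
have rl : r x = l y by apply/eqP; rewrite -subr_eq0 g0.
have : 0 < e * - (M x - M y).
  by apply: mulr_gt0 => //; rewrite oppr_gt0 Mlt //; apply/eqP.
move: h'; rewrite g0; lra.
Qed.

Theorem theorem3p2 (R : realType) (d : Order.disp_t) (X : finPOrderType d)
  (S : R -> Prop) :
  (exists s, S s) ->
  (forall s, S s -> 0 <= s) ->
  in_C X S ->
  ((exists l r : X -> R, S_rep S l r /\ twin_free l r) ->
     exists l r : X -> R, S_rep S l r /\ distinguishing l r) /\
  (~ S 0 ->
     exists l r : X -> R, S_rep S l r /\ distinguishing l r).
Proof.
move=> _ Spos [l0 [r0 Hrep]]; split.
  move=> [l [r [Hr tf]]]; apply: (core Hr) => x y xy rl.
  have [[lr _] _] := Hr; have := lr x; have := lr y => hy hx.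
  have [//|hne] := boolP (l x + r x < l y + r y).
  exfalso; apply: xy; apply: tf; lra.
move=> nS0; apply: (core Hrep) => x y xy rl.
have [[lr _] HS] := Hrep.
have pos : forall z, l0 z < r0 z.
  move=> z; have := Spos _ (HS z); rewrite le_eqVlt => /orP [/eqP h|]; last lra.
  by exfalso; apply: nS0; rewrite h.
have := pos x; have := pos y; lra.
Qed.
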